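(* Let $d \geq 0$, let $\mathcal{H}$ be a $(d+1)$-dimensional complex Hilbert space, and let $(\ket{x})_{x \in X}$ be an orthonormal basis of $\mathcal{H}$; call the associated classical structure (the special commutative $\dagger$-Frobenius algebra whose comultiplication copies the basis, $\ket{x} \mapsto \ket{x}\otimes\ket{x}$) the $X$ structure, and the basis vectors the $X$-classical points. Let $\mathbb{G} = (X,\oplus,0)$ be a finite abelian group structure on $X$ (so of order $d+1$), and let $\mathbb{S}$ be a finite consistent system of $\mathbb{G}$-valued $\mathbb{Z}$-module equations $$\bigoplus_{r=1}^{M} n^s_r\, y_r = a^s, \qquad s = 1,\dots,S,$$ with $n^s_r \in \mathbb{Z}$ and $a^s \in \mathbb{G}$, which has no solution in $\mathbb{G}$. Then there exists a quasi-special commutative $\dagger$-Frobenius algebra $Z$ on $\mathcal{H}$ (the $Z$ structure) such that: (i) the $X$ and $Z$ structures are strongly complementary, so that the $X$-classical points form a subgroup $K$ of the abelian group $P$ of $Z$-phases; (ii) the subgroup $K$ of $X$-classical points is isomorphic to $\mathbb{G}$; (iii) the system $\mathbb{S}$ (with its constants $a^s$ regarded as elements of $K \leq P$ via this isomorphism) admits a solution $(y_r := \beta_r)_{r=1}^M$ in the group $P$ of $Z$-phases.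
   Context: A system $\bigoplus_{r=1}^{M} n^s_r y_r = a^s$ ($s=1,\dots,S$) of $\mathbb{Z}$-module equations valued in an abelian group $K$ is consistent if, writing $\underline{n}^s = (n^s_1,\dots,n^s_M) \in \mathbb{Z}^M$, for every $J \geq 1$, indices $s_1,\dots,s_J$ and integers $c_1,\dots,c_J$: $\sum_j c_j \underline{n}^{s_j} = \underline{0}$ in $\mathbb{Z}^M$ implies $\bigoplus_j c_j a^{s_j} = 0$ in $K$. If $K \leq P$, a solution in $P$ is a family $(\beta_r)_{r=1}^M$ of elements of $P$ satisfying all equations with $y_r := \beta_r$. A quasi-special commutative $\dagger$-Frobenius algebra on $\mathcal{H}$ consists of a commutative associative unital multiplication $\mu_Z:\mathcal{H}\otimes\mathcal{H}\to\mathcal{H}$ with unit state $\eta_Z$, satisfying the Frobenius law with respect to its adjoint $\mu_Z^\dagger$, and such that $\mu_Z \circ \mu_Z^\dagger$ is a non-zero scalar multiple of the identity. A phase state (a $Z$-phase) is a state $\ket{\psi}$ with $(\bra{\psi}\otimes \mathrm{id}_{\mathcal{H}})\circ \mu_Z^\dagger \circ \ket{\psi} = \eta_Z$; the $Z$-phases form an abelian group $P$ under $(\psi,\phi)\mapsto \mu_Z(\ket{\psi}\otimes\ket{\phi})$ with unit $\eta_Z$ (states identified up to global phase). The $X$ and $Z$ structures are strongly complementary if the multiplication/unit of $Z$ and the comultiplication/counit of $X$ satisfy the bialgebra laws (up to scalars); in that case the $X$-classical points are $Z$-phases and form a subgroup of $P$. *)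

(* Defs.v *)
From HB Require Import structures.
From mathcomp Require Import all_boot all_order all_algebra.
From mathcomp Require Import complex reals.
Set Implicit Arguments. Unset Strict Implicit. Unset Printing Implicit Defensive.
Import Order.TTheory GRing.Theory Num.Theory.
Local Open Scope ring_scope.

Section Systems.
Variable G : zmodType.
Variables (S M : nat).

Definition consistent_system (n : 'I_S -> 'I_M -> int) (a : 'I_S -> G) : Prop :=
  forall (J : nat) (idx : 'I_J -> 'I_S) (c : 'I_J -> int),
    (0 < J)%N ->
    (forall r : 'I_M, \sum_(j < J) c j * n (idx j) r = 0) ->
    \sum_(j < J) a (idx j) *~ c j = 0.

Definition has_solution_in (n : 'I_S -> 'I_M -> int) (a : 'I_S -> G) : Prop :=
  exists y : 'I_M -> G, forall s : 'I_S, \sum_(r < M) y r *~ n s r = a s.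
End Systems.

Section Frobenius.
Variable C : numClosedFieldType.
Variable X : finType.

(* states of H = C^X, written in the X basis *)
Definition state := X -> C.

Definition ket (x : X) : state := fun y => (y == x)%:R.

(* A multiplication mu : H (x) H -> H is given by its matrix entries
   mu k i j = <k| mu |i j>; its adjoint (the comultiplication) has entries
   <a b| mu^dagger |k> = (mu k a b)^*. *)
Definition mult (mu : X -> X -> X -> C) (u v : state) : state :=
  fun k => \sum_(i : X) \sum_(j : X) mu k i j * u i * v j.

Definition mu_commutative (mu : X -> X -> X -> C) : Prop :=
  forall k i j, mu k i j = mu k j i.

Definition mu_associative (mu : X -> X -> X -> C) : Prop :=
  forall k a b c, \sum_(p : X) mu k p c * mu p a b = \sum_(p : X) mu k a p * mu p b c.

Definition mu_unital (mu : X -> X -> X -> C) (eta : state) : Prop :=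
  forall u : state, mult mu eta u = u /\ mult mu u eta = u.

(* Frobenius law w.r.t. the adjoint:
   (id (x) mu) o (mu^dag (x) id) = mu^dag o mu = (mu (x) id) o (id (x) mu^dag),
   stated entrywise <a b| _ |c e>. *)
Definition mu_frobenius (mu : X -> X -> X -> C) : Prop :=
  forall a b c e,
    (\sum_(p : X) (mu c a p)^* * mu b p e = \sum_(k : X) (mu k a b)^* * mu k c e) /\
    (\sum_(p : X) mu a c p * (mu e p b)^* = \sum_(k : X) (mu k a b)^* * mu k c e).

Definition mu_quasi_special (mu : X -> X -> X -> C) : Prop :=
  exists z : C, z != 0 /\
    forall k l, \sum_(a : X) \sum_(b : X) mu k a b * (mu l a b)^* = z * (k == l)%:R.

Definition qs_comm_dagger_frobenius (mu : X -> X -> X -> C) (eta : state) : Prop :=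
  [/\ mu_commutative mu, mu_associative mu, mu_unital mu eta,
      mu_frobenius mu & mu_quasi_special mu].

(* Strong complementarity with the X structure (comultiplication |x> |-> |x>|x>,
   counit <x| |-> 1): the bialgebra laws between (mu, eta) and (delta_X, eps_X),
   each holding up to a non-zero scalar, stated entrywise in the X basis. *)
Definition strongly_complementary_X (mu : X -> X -> X -> C) (eta : state) : Prop :=
  (* delta_X o mu = (mu (x) mu) o (id (x) swap (x) id) o (delta_X (x) delta_X) *)
  (exists z : C, z != 0 /\
     forall a b i j, z * ((a == b)%:R * mu a i j) = mu a i j * mu b i j) /\
  (* delta_X o eta = eta (x) eta *)
  (exists z : C, z != 0 /\
     forall a b, z * ((a == b)%:R * eta a) = eta a * eta b) /\
  (* eps_X o mu = eps_X (x) eps_X *)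
  (exists z : C, z != 0 /\
     forall i j, \sum_(k : X) mu k i j = z) /\
  (* eps_X o eta = 1 (up to a non-zero scalar) *)
  (\sum_(k : X) eta k != 0).

(* Z-phases: (<psi| (x) id) o mu^dag o |psi> = eta *)
Definition is_phase (mu : X -> X -> X -> C) (eta psi : state) : Prop :=
  forall b : X,
    \sum_(a : X) (psi a)^* * (\sum_(i : X) (mu i a b)^* * psi i) = eta b.

Definition eq_up_to_phase (u v : state) : Prop :=
  exists l : C, `|l| = 1 /\ forall x, u x = l * v x.

Definition ppow (mu : X -> X -> X -> C) (eta u : state) (k : nat) : state :=
  iter k (mult mu u) eta.

(* the integer multiple n.beta in P, given beta and its inverse gamma in P *)
Definition zpow (mu : X -> X -> X -> C) (eta beta gamma : state) (z : int) : state :=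
  if (0 <= z) then ppow mu eta beta (absz z) else ppow mu eta gamma (absz z).

Definition psum (mu : X -> X -> X -> C) (eta : state) (M : nat) (f : 'I_M -> state)
  : state := foldr (fun r acc => mult mu (f r) acc) eta (enum 'I_M).

(* sigma : G -> {X-classical points} (via x |-> |sigma x>) is a group isomorphism
   onto the subgroup K of X-classical points of the phase group P *)
Definition iso_to_classical_points (G : finZmodType) (mu : X -> X -> X -> C)
  (eta : state) (sigma : G -> X) : Prop :=
  injective sigma /\ #|G| = #|X| /\
  eq_up_to_phase (ket (sigma 0)) eta /\
  forall g h : G,
    eq_up_to_phase (mult mu (ket (sigma g)) (ket (sigma h))) (ket (sigma (g + h))).

Definition solvable_in_phases (G : finZmodType) (mu : X -> X -> X -> C) (eta : state)
  (sigma : G -> X) (S M : nat) (n : 'I_S -> 'I_M -> int) (a : 'I_S -> G) : Prop :=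
  exists beta gamma : 'I_M -> state,
    (forall r, [/\ is_phase mu eta (beta r), is_phase mu eta (gamma r) &
                  eq_up_to_phase (mult mu (beta r) (gamma r)) eta]) /\
    forall s : 'I_S,
      eq_up_to_phase (psum mu eta (fun r => zpow mu eta (beta r) (gamma r) (n s r)))
                     (ket (sigma (a s))).
End Frobenius.
Arguments ket {C X} x _.

(* Main.v *)
Require Import Defs.
From HB Require Import structures.
From mathcomp Require Import all_boot all_order all_algebra.
From mathcomp Require Import all_fingroup all_solvable all_field all_character.
From mathcomp Require Import complex reals.
From mathcomp Require Import ring.
From Stdlib Require Import FunctionalExtensionality.
Import Order.TTheory GRing.Theory Num.Theory.
Local Open Scope ring_scope.


Lemma prim_root_closed (F : closedFieldType) n : (0 < n)%N -> n%:R != 0 :> F ->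
  exists z : F, n.-primitive_root z.
Proof.
move=> n_gt0 nz.
pose p : {poly F} := 'X^n - 1; have [r Dp] := closed_field_poly_normal p.
rewrite (monicP _) ?monicXnsubC // scale1r in Dp.
have rn1: all n.-unity_root r by apply/allP=> z; rewrite -root_prod_XsubC -Dp.
have sz_r: (n < (size r).+1)%N.
  by rewrite -(size_prod_XsubC r id) -Dp size_XnsubC.
have [|z] := hasP (has_prim_root n_gt0 rn1 _ sz_r); last by exists z.
by rewrite -separable_prod_XsubC -Dp separable_Xn_sub_1.
Qed.

Section Chars.
Variables (R : realType) (G : finZmodType).
Local Notation C := R[i].
Local Notation N := #|G|.

Lemma N_gt0 : (0 < N)%N.
Proof. by apply/card_gt0P; exists 0. Qed.

Lemma chars_exist : exists ch : 'I_N -> G -> C,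
  [/\ forall i x y, ch i (x + y) = ch i x * ch i y,
      forall i x, `|ch i x| = 1,
      forall i j, \sum_(x : G) ch i x * (ch j x)^* = (N * (i == j))%:R &
      forall x y, \sum_(i < N) (ch i x)^* * ch i y = (N * (x == y))%:R].
Proof.
have [zC pzC] := C_prim_root_exists N_gt0.
have [zR pzR] : exists z : C, N.-primitive_root z.
  by apply: prim_root_closed; rewrite ?N_gt0 // pnatr_eq0 -lt0n N_gt0.
pose gG := [set: G]%G.
have abG : abelian gG by apply/centsP=> x _ y _; exact: addrC.
have lin i : 'chi[gG]_i \is a linear_char := char_abelianP _ abG i.
have inG (x : G) : x \in gG by rewrite inE.
have e1 i (x : G) : 'chi[gG]_i x ^+ N = 1.
  rewrite -lin_charX // -(cardsT G) expg_cardG //; exact: lin_char1.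
pose k i x : 'I_N := sval (prim_rootP pzC (e1 i x)).
have hk i x : 'chi[gG]_i x = zC ^+ k i x by rewrite /k; case: prim_rootP.
pose chR i x := zR ^+ (k i x).
have homR i (x y : G) : chR i (x + y) = chR i x * chR i y.
  have := lin_charM (lin i) (inG x) (inG y).
  rewrite !hk -exprD => /eqP; rewrite (eq_prim_root_expr pzC) => h.
  by rewrite /chR -exprD; apply/eqP; rewrite (eq_prim_root_expr pzR).
have nR : `|zR| = 1.
  have : `|zR| ^+ N = 1 by rewrite -normrX (prim_expr_order pzR) normr1.
  by move/eqP; rewrite pexpr_eq1 ?normr_ge0 -?lt0n ?N_gt0 // => /eqP.
have nchR i x : `|chR i x| = 1 by rewrite /chR normrX nR expr1n.
have conjR i x : chR i x * (chR i x)^* = 1.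
  by rewrite -normCK nchR expr1n.
have hN : Nirr gG = N.
  by rewrite NirrE; move: abG; rewrite card_classes_abelian cardsT => /eqP.
pose ch (i : 'I_N) x := chR (cast_ord (esym hN) i) x.
have rowo i j : \sum_(x : G) ch i x * (ch j x)^* = (N * (i == j))%:R.
  rewrite /ch -(inj_eq (@cast_ord_inj _ _ (esym hN))).
  set i' := cast_ord _ i; set j' := cast_ord _ j.
  have [eij|nij] := eqVneq i' j'.
    transitivity (\sum_(x : G) (1 : C)); first by apply: eq_bigr => x _; rewrite eij; exact: conjR.
    by rewrite sumr_const muln1.
  rewrite muln0.
  have [x0 hx0] : exists x0, chR i' x0 != chR j' x0.
    apply/existsP; apply: contraR nij; rewrite negb_exists => /forallP h.
    apply/eqP; apply: irr_inj; apply/cfunP => x.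
    by move: (h x); rewrite negbK /chR (eq_prim_root_expr pzR) -(eq_prim_root_expr pzC) -!hk => /eqP.
  pose phi x := chR i' x * (chR j' x)^*.
  have phiM x y : phi (x + y) = phi x * phi y.
    by rewrite /phi !homR rmorphM /= mulrACA.
  have phi1 : phi x0 != 1.
    apply: contra hx0 => /eqP h; apply/eqP.
    by rewrite -[LHS]mulr1 -(conjR j' x0) mulrCA -/(phi x0) h mulr1.
  set Sm := \sum_x _.
  have : Sm = phi x0 * Sm.
    rewrite /Sm mulr_sumr (reindex_inj (addrI x0)) /=.
    by apply: eq_bigr => x _; rewrite -phiM.
  move/eqP; rewrite -subr_eq0 -{1}[Sm]mul1r -mulrBl mulf_eq0 subr_eq0 eq_sym.
  by rewrite (negbTE phi1) /= => /eqP.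
exists ch; split => //.
- by move=> i x y; rewrite /ch homR.
- by move=> i x; rewrite /ch nchR.
move=> x y.
pose U : 'M[C]_N := \matrix_(i, j) ch i (enum_val j).
pose V : 'M[C]_N := \matrix_(i, j) (N%:R^-1 * (U j i)^*).
have NN0 : N%:R != 0 :> C by rewrite pnatr_eq0 -lt0n N_gt0.
have UV : U *m V = 1%:M.
  apply/matrixP => i j; rewrite !mxE.
  under eq_bigr do rewrite !mxE mulrCA.
  rewrite -mulr_sumr -(big_enum_val (fun x => ch i x * (ch j x)^*)) /=.
  rewrite rowo natrM mulrA mulVf // mul1r.
  by case: (i == j).
have := congr1 (fun A : 'M[C]_N => A (enum_rank x) (enum_rank y)) (mulmx1C UV).
rewrite !mxE.
under eq_bigr do rewrite !mxE -mulrA.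
rewrite !enum_rankK -mulr_sumr (inj_eq enum_rank_inj) => h.
apply: (mulfI (invr_neq0 NN0)); rewrite h natrM mulrA mulVf // mul1r.
by case: (x == y).
Qed.
End Chars.


Section Solve.
Set Implicit Arguments. Unset Strict Implicit.
Variable C : numClosedFieldType.

Definition act p q (A : 'M[int]_(p, q)) (v : 'I_q -> C) : 'I_p -> C :=
  fun i => \prod_j v j ^ A i j.

Lemma prodXz (I : Type) (r : seq I) (P : pred I) (F : I -> C) (z : int) :
  (forall i, F i != 0) ->
  (\prod_(i <- r | P i) F i) ^ z = \prod_(i <- r | P i) F i ^ z.
Proof.
move=> nz; elim: r => [|x r IH]; first by rewrite !big_nil exp1rz.
rewrite !big_cons; case: (P x) => //.
rewrite exprzMl ?IH // unitfE ?nz //.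
rewrite prodf_seq_neq0; by elim: (r) => //= y r2 ->; rewrite nz implybT.
Qed.

Lemma expz_sum (I : Type) (r : seq I) (P : pred I) (f : I -> int) (x : C) :
  x != 0 -> x ^ (\sum_(i <- r | P i) f i) = \prod_(i <- r | P i) x ^ f i.
Proof.
move=> nz; elim: r => [|y r IH]; first by rewrite !big_nil expr0z.
rewrite !big_cons; case: (P y) => //.
by rewrite exprzDr ?IH // unitfE.
Qed.

Lemma act_nz p q (A : 'M[int]_(p, q)) (v : 'I_q -> C) : (forall j, v j != 0) -> forall i, act A v i != 0.
Proof.
move=> nz i; rewrite /act; apply/prodf_neq0 => j _.
exact: expfz_neq0.
Qed.

Lemma act_mul p q r (A : 'M[int]_(p, q)) (B : 'M[int]_(q, r)) (v : 'I_r -> C) :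
  (forall j, v j != 0) -> act (A *m B) v = act A (act B v).
Proof.
move=> nz; apply: functional_extensionality => i; rewrite /act.
rewrite [RHS](eq_bigr (fun k => \prod_j0 (v j0 ^ B k j0) ^ A i k)); last first.
  by move=> k _; rewrite prodXz // => j; exact: expfz_neq0.
rewrite exchange_big /=; apply: eq_bigr => j _.
rewrite mxE expz_sum //; apply: eq_bigr => k _.
by rewrite exprz_exp mulrC.
Qed.

Lemma act1 p (v : 'I_p -> C) : act 1%:M v = v.
Proof.
apply: functional_extensionality => i; rewrite /act (bigD1 i) //= big1 ?mulr1.
  by rewrite mxE eqxx expr1z.
by move=> j ji; rewrite mxE eq_sym (negbTE ji) mulr0n expr0z.
Qed.

Lemma norm_expz1 (x : C) (z : int) : `|x| = 1 -> `|x ^ z| = 1.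
Proof.
move=> nx; have x0 : x != 0 by rewrite -normr_eq0 nx oner_eq0.
case: z => m; first by rewrite normrX nx expr1n.
by rewrite NegzE -invr_expz normrV ?unitfE ?expf_neq0 // normrX nx expr1n invr1.
Qed.

Lemma act_norm p q (A : 'M[int]_(p, q)) (v : 'I_q -> C) : (forall j, `|v j| = 1) -> forall i, `|act A v i| = 1.
Proof.
move=> n1 i; rewrite /act normr_prod big1 // => j _; exact: norm_expz1.
Qed.

Lemma exists_root (b : C) (d : int) : `|b| = 1 -> d != 0 ->
  exists v, v ^ d = b /\ `|v| = 1.
Proof.
move=> nb.
have rn m : (0 < m)%N -> `|m.-root b| = 1.
  move=> m0; apply/eqP; rewrite -(pexpr_eq1 (n:=m)) ?normr_ge0 -?lt0n //.
  by rewrite -normrX rootCK // nb.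
case: d => m nz.
  have m0 : (0 < m)%N by rewrite lt0n; apply: contraNneq nz => ->.
  by exists (m.-root b); rewrite -exprnP rootCK // rn.
exists (m.+1.-root b)^-1; split.
  by rewrite NegzE -invr_expz -exprnP exprVn invrK rootCK.
have r1 := rn m.+1 (ltn0Sn m).
rewrite normrV ?r1 ?invr1 //.
by rewrite unitfE -normr_eq0 r1 oner_eq0.
Qed.

Lemma solve_mult S M (Nm : 'M[int]_(S, M)) (w : 'I_S -> C) :
  (forall s, `|w s| = 1) ->
  (forall c : 'I_S -> int, (forall r, \sum_s c s * Nm s r = 0) -> \prod_s w s ^ c s = 1) ->
  exists t : 'I_M -> C, (forall r, `|t r| = 1) /\ forall s, \prod_r t r ^ Nm s r = w s.
Proof.
move=> nw cons.
have [L uL [Rm uR [d _ hN]]] := int_Smith_normal_form Nm.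
set D := \matrix_(i, j) _ in hN.
pose b := act (invmx L) w.
have nzw s : w s != 0 by rewrite -normr_eq0 nw oner_eq0.
have nb : forall i, `|b i| = 1 := act_norm _ nw.
have bcons i : (forall j, D i j = 0) -> b i = 1.
  move=> Dz; apply: cons => r.
  have : (invmx L *m Nm) i r = 0.
    rewrite hN !mulmxA mulVmx // mul1mx mxE big1 // => k _.
    by rewrite Dz mul0r.
  by rewrite mxE.
have hu : forall j : 'I_M, exists v : C, `|v| = 1 /\
    (forall i : 'I_S, (i : nat) = j -> D i j != 0 -> v ^ D i j = b i).
  move=> j; case: (ltnP j S) => jS; last first.
    by exists 1; split => [|i ij]; rewrite ?normr1 //; move: (ltn_ord i); rewrite ij ltnNge jS.
  pose i0 := Ordinal jS.
  have [Dz|Dnz] := eqVneq (D i0 j) 0.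
    exists 1; split => [|i ij]; rewrite ?normr1 //.
    have -> : i = i0 by apply: val_inj.
    by rewrite Dz eqxx.
  have [v [hv nv]] := exists_root (nb i0) Dnz.
  exists v; split => // i ij; by have -> : i = i0 by apply: val_inj.
have [u hu'] := fin_all_exists hu.
have nu j : `|u j| = 1 by case: (hu' j).
have nzu j : u j != 0 by rewrite -normr_eq0 nu oner_eq0.
have Du : act D u = b.
  apply: functional_extensionality => i; rewrite /act.
  have [j0 Dj0|allz] := pickP (fun j => D i j != 0); last first.
    rewrite bcons; last by move=> j; apply/eqP; move: (allz j) => /negbFE.
    by rewrite big1 // => j _; move: (allz j) => /negbFE /eqP ->; rewrite expr0z.
  have ij0 : (i : nat) = j0.
    move: Dj0; rewrite mxE; have [//|nij] := eqVneq (i : nat) j0.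
    by rewrite mulr0n eqxx.
  rewrite (bigD1 j0) //= big1 ?mulr1; first by case: (hu' j0) => _ ->.
  move=> j jj0; rewrite mxE.
  have -> : (i == j :> nat) = false.
    by apply/negbTE; rewrite ij0; apply: contra jj0 => /eqP h; apply/eqP/val_inj.
  by rewrite mulr0n expr0z.
exists (act (invmx Rm) u); split; first exact: act_norm.
move=> s; change (act Nm (act (invmx Rm) u) s = w s).
rewrite -act_mul // hN -mulmxA mulmxV // mulmx1.
rewrite act_mul // Du /b -act_mul // mulmxV // act1 //.
Qed.
End Solve.
Unset Implicit Arguments. Set Strict Implicit.


Section Glue.
Variables (C : numClosedFieldType) (G : finZmodType).

Definition muG : G -> G -> G -> C := fun k i j => (k == i + j)%:R.
Definition etaG : G -> C := ket 0.

Lemma sum_delta (c : G) (F : G -> C) : \sum_b (b == c)%:R * F b = F c.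
Proof.
rewrite (bigD1 c) //= eqxx mul1r big1 ?addr0 // => b /negbTE ->; by rewrite mul0r.
Qed.

Lemma eq_subG (k a b : G) : (k == a + b) = (b == k - a).
Proof.
apply/eqP/eqP => [->|->]; first by rewrite addrC addKr.
by rewrite addrC subrK.
Qed.

Lemma eq_frobG (x y u v : G) : (y == x - u + v) = (u + y == x + v).
Proof.
apply/eqP/eqP => [->|h]; first by rewrite addrCA addrA subrK.
rewrite -addrA (addrC (-u)) addrA -h addrC addKr //.
Qed.

Lemma mult_eq (u v : G -> C) k : mult muG u v k = \sum_a u a * v (k - a).
Proof.
rewrite /mult; apply: eq_bigr => a _.
under eq_bigr do rewrite /muG eq_subG -mulrA mulrCA.
by rewrite -mulr_sumr sum_delta.
Qed.

Lemma frob_struct : qs_comm_dagger_frobenius muG etaG.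
Proof.
split.
- by move=> k i j; rewrite /muG addrC.
- move=> k a b c.
  under eq_bigr do rewrite /muG mulrC.
  rewrite sum_delta.
  under eq_bigr do rewrite /muG eq_subG.
  by rewrite sum_delta [k - a == _]eq_sym -eq_subG addrA.
- move=> u; split; apply: functional_extensionality => k; rewrite mult_eq.
    under eq_bigr do rewrite /etaG /ket.
    by rewrite sum_delta subr0.
  under eq_bigr do rewrite /etaG /ket subr_eq0 eq_sym mulrC.
  by rewrite sum_delta.
- move=> a b c e; split.
    transitivity ((b == c - a + e)%:R : C).
      under eq_bigr do rewrite /muG conjC_nat eq_subG.
      by rewrite sum_delta.
    under eq_bigr do rewrite /muG conjC_nat.
    by rewrite sum_delta eq_frobG eq_sym.
  transitivity ((e == a - c + b)%:R : C).
    under eq_bigr do rewrite /muG conjC_nat eq_subG.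
    by rewrite sum_delta.
  under eq_bigr do rewrite /muG conjC_nat.
  by rewrite sum_delta eq_frobG eq_sym.
- exists #|G|%:R; split; first by rewrite pnatr_eq0 -lt0n N_gt0.
  move=> k l.
  transitivity (\sum_(a : G) ((l == k)%:R : C)).
    apply: eq_bigr => a _.
    under eq_bigr do rewrite /muG conjC_nat eq_subG.
    by rewrite sum_delta addrC subrK.
  rewrite sumr_const mulr_natl [l == k]eq_sym. by rewrite cardT -cardE.
Qed.
End Glue.

Section SC.
Variables (C : numClosedFieldType) (G : finZmodType).

Lemma sc_struct : strongly_complementary_X (muG C G) (etaG C G).
Proof.
split; [|split; [|split]].
- exists 1; split; first exact: oner_neq0.
  move=> a b i j; rewrite mul1r /muG -!natrM !mulnb.
  have [->|nab] := eqVneq a b; first by rewrite andbb.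
  have [ha|] := eqVneq a (i + j); last by rewrite andbF.
  have [hb|] := eqVneq b (i + j); last by rewrite andbF.
  by case/eqP: nab; rewrite ha hb.
- exists 1; split; first exact: oner_neq0.
  move=> a b; rewrite mul1r /etaG /ket -!natrM !mulnb.
  have [->|nab] := eqVneq a b; first by rewrite andbb.
  have [ha|] := eqVneq a 0; last by rewrite andbF.
  have [hb|] := eqVneq b 0; last by rewrite andbF.
  by case/eqP: nab; rewrite ha hb.
- exists 1; split; first exact: oner_neq0.
  move=> i j; rewrite /muG.
  under eq_bigr do rewrite -[_%:R]mulr1.
  by rewrite sum_delta.
- rewrite /etaG /ket.
  under eq_bigr do rewrite -[_%:R]mulr1.
  by rewrite sum_delta oner_neq0.
Qed.
End SC.

Lemma sum_delta1 (C : numClosedFieldType) (T : finType) (c : T) (F : T -> C) :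
  \sum_b (b == c)%:R * F b = F c.
Proof.
rewrite (bigD1 c) //= eqxx mul1r big1 ?addr0 // => b /negbTE ->; by rewrite mul0r.
Qed.

Section Fourier.
Variables (C : numClosedFieldType) (G : finZmodType) (ch : 'I_#|G| -> G -> C).
Hypothesis chM : forall i x y, ch i (x + y) = ch i x * ch i y.
Hypothesis chN : forall i x, `|ch i x| = 1.
Hypothesis rowo : forall i j, \sum_(x : G) ch i x * (ch j x)^* = (#|G| * (i == j))%:R.
Hypothesis colo : forall x y, \sum_(i < #|G|) (ch i x)^* * ch i y = (#|G| * (x == y))%:R.
Local Notation n := #|G|.

Lemma nn0 : n%:R != 0 :> C.
Proof. by rewrite pnatr_eq0 -lt0n N_gt0. Qed.

Lemma ch_nz i x : ch i x != 0.
Proof. by rewrite -normr_eq0 chN oner_eq0. Qed.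

Lemma ch0 i : ch i 0 = 1.
Proof.
have := chM i 0 0; rewrite addr0 -{1}[ch i 0]mulr1 => /mulfI h.
by rewrite [RHS]h // ch_nz.
Qed.

Lemma chC i x : (ch i x)^* = (ch i x)^-1.
Proof.
apply: (mulfI (ch_nz i x)); rewrite mulfV ?ch_nz //.
by rewrite -normCK chN expr1n.
Qed.

Lemma chNeg i x : ch i (- x) = (ch i x)^*.
Proof.
apply: (mulfI (ch_nz i x)); rewrite -chM subrr ch0 chC mulfV ?ch_nz //.
Qed.

Lemma chB i k a : (ch i (k - a))^* = (ch i k)^* * ch i a.
Proof. by rewrite chM rmorphM /= chNeg conjCK. Qed.

Definition psi (t : 'I_n -> C) : G -> C := fun x => n%:R^-1 * \sum_i t i * (ch i x)^*.

Lemma conv t s k : \sum_a psi t a * psi s (k - a) = psi (fun i => t i * s i) k.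
Proof.
have hn := nn0.
rewrite /psi.
rewrite (eq_bigr (fun a => n%:R^-1 * n%:R^-1 * \sum_i \sum_j
   (t i * s j * (ch j k)^*) * (ch j a * (ch i a)^*))); last first.
  move=> a _; rewrite mulrACA big_distrlr /=; congr (_ * _).
  apply: eq_bigr => i _; apply: eq_bigr => j _; rewrite chB; ring.
rewrite -mulr_sumr exchange_big /=.
rewrite (eq_bigr (fun i => t i * s i * (ch i k)^* * n%:R)); last first.
  move=> i _; rewrite exchange_big /=.
  rewrite (eq_bigr (fun j => (t i * s j * (ch j k)^*) * (n * (j == i))%:R)); last first.
    by move=> j _; rewrite -mulr_sumr rowo.
  rewrite (bigD1 i) //= eqxx muln1 big1 ?addr0 // => j /negbTE ->.
  by rewrite muln0 mulr0.
rewrite -mulr_suml; field; exact: hn.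
Qed.

Lemma mult_psi t s : mult (muG C G) (psi t) (psi s) = psi (fun i => t i * s i).
Proof. by apply: functional_extensionality => k; rewrite mult_eq conv. Qed.

Lemma psi_ket g : psi (fun i => ch i g) = ket g.
Proof.
apply: functional_extensionality => x; rewrite /psi /ket.
under eq_bigr do rewrite mulrC.
rewrite colo natrM mulrA mulVf ?nn0 // mul1r //.
Qed.

Lemma psi1 : psi (fun _ => 1) = etaG C G.
Proof.
rewrite /etaG -psi_ket; congr psi; apply: functional_extensionality => i.
by rewrite ch0.
Qed.

Lemma psi_conj t x : (psi t x)^* = psi (fun i => (t i)^*) (- x).
Proof.
rewrite /psi rmorphM /= rmorph_sum /= fmorphV rmorph_nat; congr (_ * _).
by apply: eq_bigr => i _; rewrite rmorphM /= chNeg !conjCK.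
Qed.

Lemma phase_psi t : (forall i, `|t i| = 1) -> is_phase (muG C G) (etaG C G) (psi t).
Proof.
move=> nt b.
transitivity (\sum_a psi (fun i => (t i)^*) (- a) * psi t (b - - a)).
  apply: eq_bigr => a _; rewrite psi_conj opprK addrC; congr (_ * _).
  rewrite /muG.
  under eq_bigr do rewrite conjC_nat.
  exact: sum_delta.
rewrite (reindex_inj (@oppr_inj G)) /= .
under eq_bigr do rewrite opprK.
rewrite conv -psi1; congr psi; apply: functional_extensionality => i.
by rewrite -normCKC nt expr1n.
Qed.

Lemma phase_ket x : is_phase (muG C G) (etaG C G) (ket x).
Proof. by rewrite -psi_ket; apply: phase_psi => i; exact: chN. Qed.

Lemma ppow_psi t m : ppow (muG C G) (etaG C G) (psi t) m = psi (fun i => t i ^+ m).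
Proof.
elim: m => [|m IH] /=; first by rewrite -psi1.
rewrite /ppow /= -/(ppow _ _ _ m) IH mult_psi; congr psi.
by apply: functional_extensionality => i; rewrite exprS.
Qed.

Lemma zpow_psi t z : (forall i, t i != 0) ->
  zpow (muG C G) (etaG C G) (psi t) (psi (fun i => (t i)^-1)) z = psi (fun i => t i ^ z).
Proof.
move=> nz; rewrite /zpow; case: z => m /=; rewrite ppow_psi //.
rewrite mult_psi; congr psi; apply: functional_extensionality => i.
by rewrite -exprS exprVn NegzE -invr_expz -exprnP.
Qed.

Lemma psum_psi M (F : 'I_M -> 'I_n -> C) :
  psum (muG C G) (etaG C G) (fun r => psi (F r)) = psi (fun i => \prod_(r < M) F r i).
Proof.
rewrite /psum.
have -> : (fun i => \prod_(r < M) F r i) = (fun i => \prod_(r <- enum 'I_M) F r i).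
  apply: functional_extensionality => i; rewrite big_enum /=.
  by apply: eq_bigl => r; rewrite inE.
elim: (enum 'I_M) => [|r l IH] /=; first by rewrite -psi1; congr psi;
  apply: functional_extensionality => i; rewrite big_nil.
rewrite IH mult_psi; congr psi; apply: functional_extensionality => i.
by rewrite big_cons.
Qed.

Lemma ch_sum i (I : finType) (f : I -> G) : ch i (\sum_j f j) = \prod_j ch i (f j).
Proof.
exact: (big_morph (ch i) (chM i) (ch0 i)).
Qed.

Lemma ch_mulz i x z : ch i (x *~ z) = ch i x ^ z.
Proof.
have hn m : ch i (x *+ m) = ch i x ^+ m.
  elim: m => [|m IH]; first by rewrite mulr0n ch0 expr0.
  by rewrite mulrS chM IH exprS.
case: z => m; first by rewrite -exprnP -hn.
by rewrite NegzE mulrNz chNeg chC -invr_expz -exprnP -hn.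
Qed.
End Fourier.


Theorem mainTheorem1 (R : realType) (d : nat) (G : finZmodType)
  (hcard : #|G| = d.+1) (S M : nat)
  (n : 'I_S -> 'I_M -> int) (a : 'I_S -> G)
  (hcons : consistent_system n a) (hnosol : ~ has_solution_in n a) :
  exists (mu : G -> G -> G -> R[i]) (eta : G -> R[i]),
    [/\ qs_comm_dagger_frobenius mu eta,
        strongly_complementary_X mu eta /\ (forall x : G, is_phase mu eta (ket x))
      & exists sigma : G -> G,
        iso_to_classical_points mu eta sigma /\ solvable_in_phases mu eta sigma n a].
Proof.
have [ch [chM chN rowo colo]] := chars_exist R G.
pose P := @psi R[i] G ch.
have Pket g : P (fun i => ch i g) = ket g by apply: psi_ket; assumption.
have Pmult t s : mult (muG _ G) (P t) (P s) = P (fun i => t i * s i).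
  by apply: mult_psi; assumption.
have P1 : P (fun _ => 1) = etaG _ G by apply: psi1; assumption.
exists (muG _ G), (etaG _ G); split.
- exact: frob_struct.
- split; first exact: sc_struct.
  by move=> x; apply: (@phase_ket _ _ ch); assumption.
exists id; split.
  split => //; split => //; split.
    by exists 1; split => [|x]; rewrite ?normr1 ?mul1r.
  move=> g h; exists 1; split => [|x]; rewrite ?normr1 ?mul1r //.
  by rewrite /= -!Pket Pmult; congr (P _ x); apply: functional_extensionality => i; rewrite chM.
have hsol i : exists T : 'I_M -> R[i], (forall r, `|T r| = 1) /\
    forall s, \prod_(r < M) T r ^ n s r = ch i (a s).
  have := @solve_mult _ S M (\matrix_(s, r) n s r) (fun s => ch i (a s)) (fun s => chN i (a s)).
  case.
    move=> c hc.
    case: S n a hcons hnosol c hc => [|S'] n' a' hcons' _ c hc; first by rewrite big_ord0.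
    have := hcons' S'.+1 id c (ltn0Sn _).
    have hc' : forall r, \sum_(j < S'.+1) c j * n' (id j) r = 0.
      by move=> r; rewrite -[RHS](hc r); apply: eq_bigr => j _; rewrite mxE.
    move=> /(_ hc') hs.
    have ch0' : ch i 0 = 1 by apply: ch0; assumption.
    have chs : ch i (\sum_(j < S'.+1) a' j *~ c j) = \prod_(j < S'.+1) ch i (a' j *~ c j).
      by apply: ch_sum; assumption.
    rewrite -[RHS]ch0' -hs chs.
    apply: eq_bigr => j _; symmetry; apply: (@ch_mulz _ _ ch); assumption.
  move=> T [nT hT]; exists T; split => // s; rewrite -hT.
  by apply: eq_bigr => r _; rewrite mxE.
have [T hT] := fin_all_exists hsol.
have nzT i r : T i r != 0 by rewrite -normr_eq0 (proj1 (hT i) r) oner_eq0.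
exists (fun r => P (fun i => T i r)), (fun r => P (fun i => (T i r)^-1)); split.
  move=> r; split.
  - by apply: (@phase_psi _ _ ch); try assumption; move=> i; exact: (proj1 (hT i) r).
  - apply: (@phase_psi _ _ ch); try assumption; move=> i.
    by rewrite normrV ?unitfE ?nzT // (proj1 (hT i) r) invr1.
  - exists 1; split => [|x]; rewrite ?normr1 ?mul1r //.
    rewrite Pmult -P1; congr (P _ x); apply: functional_extensionality => i.
    by rewrite mulfV.
move=> s; exists 1; split => [|x]; rewrite ?normr1 ?mul1r //.
have -> : (fun r => zpow (muG _ G) (etaG _ G) (P (fun i => T i r)) (P (fun i => (T i r)^-1)) (n s r))
   = (fun r => P (fun i => T i r ^ n s r)).
  apply: functional_extensionality => r.
  by apply: (@zpow_psi _ _ ch); try assumption; move=> i; exact: nzT.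
rewrite (@psum_psi _ _ ch); try assumption.
rewrite -Pket; congr (P _ x).
apply: functional_extensionality => i; exact: (proj2 (hT i) s).
Qed.
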